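(* Let $d\ge2$, let $\mathbf A,\mathbf B\in\overline{\mathbb Q}[t]$ be nonzero coprime polynomials, $\mathbf c=\mathbf A/\mathbf B$, let $\lambda\in\overline{\mathbb Q}^*$ and let $|\cdot|_v$ be an absolute value on $\overline{\mathbb Q}$. Then the limit $\lim_{n\to\infty}\frac{\log M_{n,v}(\lambda)}{d^n}$ exists, and for each $n_0\ge1$, $$\left|\lim_{n\to\infty}\frac{\log M_{n,v}(\lambda)}{d^n}-\frac{\log M_{n_0,v}(\lambda)}{d^{n_0}}\right|\le\frac{\log(2\max\{1,|\lambda|_v\})-\log(\min\{1,|\lambda|_v\})}{d^{n_0}(d-1)}.$$
   Context: The polynomials $\mathbf A_{\mathbf c,n},\mathbf B_{\mathbf c,n}$ are defined by: $\mathbf A_{\mathbf c,0}=\mathbf A$, $\mathbf B_{\mathbf c,0}=\mathbf B$; if $\mathbf A(0)\neq0$ then $\mathbf A_{\mathbf c,1}=\mathbf A^d+t\mathbf B^d$, $\mathbf B_{\mathbf c,1}=\mathbf A\mathbf B^{d-1}$, while if $\mathbf A(0)=0$ then $\mathbf A_{\mathbf c,1}=(\mathbf A^d+t\mathbf B^d)/t$, $\mathbf B_{\mathbf c,1}=\mathbf A\mathbf B^{d-1}/t$; for $n\ge1$, $\mathbf A_{\mathbf c,n+1}=\mathbf A_{\mathbf c,n}^d+t\mathbf B_{\mathbf c,n}^d$, $\mathbf B_{\mathbf c,n+1}=\mathbf A_{\mathbf c,n}\mathbf B_{\mathbf c,n}^{d-1}$. Then $M_{n,v}(\lambda)=\max\{|\mathbf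 A_{\mathbf c,n}(\lambda)|_v,|\mathbf B_{\mathbf c,n}(\lambda)|_v\}$. *)

(* Defs.v *)
From HB Require Import structures.
From mathcomp Require Import all_boot all_order all_algebra all_field.
From mathcomp Require Import all_classical all_reals all_analysis.
Set Implicit Arguments. Unset Strict Implicit. Unset Printing Implicit Defensive.
Import Order.TTheory GRing.Theory Num.Theory.
Local Open Scope ring_scope.

(* Qbar is modelled by algC (algebraic closure of Q). *)

Definition is_absval (R : realType) (v : algC -> R) : Prop :=
  [/\ forall x : algC, 0 <= v x,
      forall x : algC, v x = 0 <-> x = 0,
      forall x y : algC, v (x * y) = v x * v y &
      forall x y : algC, v (x + y) <= v x + v y].

Definition ABstep (d : nat) (p : {poly algC} * {poly algC}) :
    {poly algC} * {poly algC} :=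
  (p.1 ^+ d + 'X * p.2 ^+ d, p.1 * p.2 ^+ (d.-1)).

Definition ABfirst (d : nat) (A B : {poly algC}) : {poly algC} * {poly algC} :=
  if A.[0] != 0 then ABstep d (A, B)
  else (((ABstep d (A, B)).1 %/ 'X), ((ABstep d (A, B)).2 %/ 'X)).

Fixpoint ABseq (d : nat) (A B : {poly algC}) (n : nat) :
    {poly algC} * {poly algC} :=
  match n with
  | 0 => (A, B)
  | m.+1 => if m is 0 then ABfirst d A B else ABstep d (ABseq d A B m)
  end.

Definition Mnv (R : realType) (v : algC -> R) (d : nat) (A B : {poly algC})
    (n : nat) (lambda : algC) : R :=
  Num.max (v (ABseq d A B n).1.[lambda]) (v (ABseq d A B n).2.[lambda]).

(* Main.v *)
Require Import Defs.
From HB Require Import structures.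
From mathcomp Require Import all_boot all_order all_algebra all_field.
From mathcomp Require Import all_classical all_reals all_analysis.
From mathcomp Require Import ring lra.
Import Order.TTheory GRing.Theory Num.Theory numFieldNormedType.Exports.
Local Open Scope classical_set_scope.
Local Open Scope ring_scope.
Lemma pwle (R : realType) (x y : R) n : 0 <= x -> x <= y -> x ^+ n <= y ^+ n.
Proof.
move=> hx hxy; apply: lerXn2r; rewrite ?nnegrE //; exact: le_trans hxy.
Qed.

Lemma core {R : realType} (a b l P : R) (d : nat) :
  (2 <= d)%N -> 0 <= a -> 0 <= b -> 0 < l -> 0 < Num.max a b ->
  a ^+ d - l * b ^+ d <= P -> l * b ^+ d - a ^+ d <= P ->
  P <= a ^+ d + l * b ^+ d ->
  Num.min 1 l / (2 * Num.max 1 l) * Num.max a b ^+ d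
     <= Num.max P (a * b ^+ d.-1) /\
  Num.max P (a * b ^+ d.-1) <= 2 * Num.max 1 l * Num.max a b ^+ d.
Proof.
move=> d2 a0 b0 l0 M0 P1 P2 P3.
have [c ec] : exists c : R, Num.min 1 l / (2 * Num.max 1 l) = c by eexists.
rewrite ec.
have [c0 [cl [c2 lc]]] : 0 < c /\ c <= l / 2 /\ c <= 1 / 2 /\ l * c <= 1 / 2.
  rewrite -ec; have [hl|hl] := leP l 1.
    rewrite mulr1; split; first by rewrite divr_gt0.
    split=> //; split; nra.

  have lc : l / (2 * l) = 1 / 2 by field; rewrite gt_eqF.
  have l1 : 1 / (2 * l) <= 1 / 2.
    by rewrite ler_pdivrMr ?mulr_gt0 // mulrA [_ / 2 * 2]mulrC mulrA mulr1
      divff ?mul1r ?ltW // pnatr_eq0.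
  split; first by rewrite divr_gt0 ?mulr_gt0.
  split; last split => //.
    by apply: (le_trans l1); rewrite ler_pM2r //; lra.
  by rewrite mulrA mulr1 lc.
have m1l : 1 <= Num.max 1 l by rewrite le_max lexx.
have mll : l <= Num.max 1 l by rewrite le_max lexx orbT.
set m := Num.max 1 l in m1l mll *.
clearbody m.
case: d d2 P1 P2 P3 => [|[|d']] // _.
rewrite /= !exprS => P1 P2 P3.
set X := a ^+ d'; set Y := b ^+ d'.
have X0 : 0 <= X by rewrite exprn_ge0.
have Y0 : 0 <= Y by rewrite exprn_ge0.
have [hab|hab] := leP a b.
  rewrite max_r // in M0 *.
  have XY : X <= Y by apply: pwle.
  have bY : 0 < b * Y by rewrite mulr_gt0 // exprn_gt0.
  have bbY : 0 < b * (b * Y) by rewrite mulr_gt0.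
  have AB : a * (a * X) <= b * (b * Y).
    by apply: ler_pM => //; rewrite ?mulr_ge0 //; apply: ler_pM.
  have QB : a * (b * Y) <= b * (b * Y) by apply: ler_pM => //; rewrite ?mulr_ge0.
  have AQ : a * (a * X) <= a * (b * Y) by apply: ler_wpM2l => //; apply: ler_pM.
  move: AB QB AQ P1 P2 P3 bbY; set A := a * (a * X); set B := b * (b * Y);
    set Q := a * (b * Y) => AB QB AQ P1 P2 P3 bbY.
  clearbody A B Q.
  have h1 : 0 <= (l - 2 * c) * B by rewrite mulr_ge0 //; lra.
  have h2 : 0 <= (2 * m - 1 - l) * B by rewrite mulr_ge0 //; lra.
  have h3 : 0 <= (2 * m - 1) * B by rewrite mulr_ge0 //; lra.
  split.
    have [H|H] := leP (c * B) Q; first by rewrite le_max H orbT.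
    rewrite le_max; apply/orP; left; nra.
  by rewrite ge_max; apply/andP; split; nra.
have hba := ltW hab.
rewrite max_l // in M0 *.
have YX : Y <= X by apply: pwle.
have aX : 0 < a * X by rewrite mulr_gt0 // exprn_gt0.
have aaX : 0 < a * (a * X) by rewrite mulr_gt0.
have BA : b * (b * Y) <= a * (a * X).
  by apply: ler_pM => //; rewrite ?mulr_ge0 //; apply: ler_pM.
have QA : a * (b * Y) <= a * (a * X) by apply: ler_wpM2l => //; apply: ler_pM.
have BQ : b * (b * Y) <= a * (b * Y) by apply: ler_wpM2r; rewrite ?mulr_ge0.
have B0 : 0 <= b * (b * Y) by rewrite !mulr_ge0.
move: BA QA BQ P1 P2 P3 aaX B0; set A := a * (a * X); set B := b * (b * Y);
  set Q := a * (b * Y) => BA QA BQ P1 P2 P3 aaX B0.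
clearbody A B Q.
have h1 : 0 <= (1 - 2 * c) * A by rewrite mulr_ge0 //; lra.
have h2 : 0 <= (2 * m - 1 - l) * A by rewrite mulr_ge0 //; lra.
have h3 : 0 <= (2 * m - 1) * A by rewrite mulr_ge0 //; lra.
split.
  have [H|H] := leP (c * A) Q; first by rewrite le_max H orbT.
  have h4 : l * B <= l * (c * A) by rewrite ler_pM2l //; apply: (le_trans BQ); apply: ltW.
  have h5 : 0 <= (1/2 - l * c) * A by rewrite mulr_ge0 //; lra.
  rewrite le_max; apply/orP; left; nra.
by rewrite ge_max; apply/andP; split; nra.
Qed.

Section AV.
Variables (R : realType) (v : algC -> R).
Hypothesis hv : is_absval v.

Lemma v1 : v 1 = 1.
Proof.
case: hv => v0 v00 vM _.
have h : v 1 * v 1 = v 1 * 1 by rewrite -vM !mulr1.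
have : v 1 != 0 by apply/eqP => /v00 /eqP; rewrite oner_eq0.
by move=> nz; apply: (mulfI nz); rewrite h.
Qed.

Lemma vX x n : v (x ^+ n) = v x ^+ n.
Proof.
case: hv => v0 v00 vM _.
elim: n => [|n ih]; first by rewrite !expr0 v1.
by rewrite !exprS vM ih.
Qed.

Lemma vN x : v (- x) = v x.
Proof.
case: hv => v0 v00 vM _.
have h : v (-1) ^+ 2 = 1 by rewrite -vX sqrrN expr1n v1.
have e1 : v (-1) = 1.
  have := v0 (-1); move: h; set t := v (-1) => h t0; nra.
by rewrite -mulN1r vM e1 mul1r.
Qed.

Lemma vrev x y : v x - v y <= v (x + y).
Proof.
case: hv => v0 v00 vM vD.
have := vD (x + y) (- y); rewrite addrK vN; lra.
Qed.

Lemma step_ln (x y lam : algC) (d : nat) : (2 <= d)%N -> lam != 0 ->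
  (x != 0) || (y != 0) ->
  (0 < Num.max (v x) (v y)) /\
  (0 < Num.max (v (x ^+ d + lam * y ^+ d)) (v (x * y ^+ d.-1))) /\
  (`|ln (Num.max (v (x ^+ d + lam * y ^+ d)) (v (x * y ^+ d.-1)))
     - d%:R * ln (Num.max (v x) (v y))|
   <= ln (2 * Num.max 1 (v lam)) - ln (Num.min 1 (v lam))).
Proof.
move=> d2 l0 nz.
have hv' := hv; case: hv' => v0 v00 vM vD.
have vpos : forall z, z != 0 -> 0 < v z.
  by move=> z nz'; rewrite lt_def v0 andbT; apply/eqP => /v00 /eqP; apply/negP.
have l0' := vpos _ l0.
have M0 : 0 < Num.max (v x) (v y).
  case/orP: nz => [/vpos h|/vpos h]; rewrite lt_max h ?orbT //.
have P1 := vrev (x ^+ d) (lam * y ^+ d).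
have P2 := vrev (lam * y ^+ d) (x ^+ d).
have P3 := vD (x ^+ d) (lam * y ^+ d).
rewrite [lam * _ + _]addrC in P2.
rewrite vM !vX in P1 P2 P3.
rewrite vM vX.
have P2' : v lam * v y ^+ d - v x ^+ d <= v (x ^+ d + lam * y ^+ d) by lra.
have [lo up] := @core R (v x) (v y) (v lam) _ d d2 (v0 x) (v0 y) l0' M0 P1 P2' P3.
move: lo up.
set M1 := Num.max (v (x ^+ d + _)) _.
set MM := Num.max (v x) (v y).
set l := v lam.
move=> lo up.
have mn0 : 0 < Num.min 1 l by rewrite lt_min ltr01.
have mx0 : 0 < 2 * Num.max 1 l by rewrite mulr_gt0 // lt_max ltr01.
have c0 : 0 < Num.min 1 l / (2 * Num.max 1 l) by rewrite divr_gt0.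
have MMd : 0 < MM ^+ d by rewrite exprn_gt0.
have M10 : 0 < M1 by apply: (lt_le_trans _ lo); rewrite mulr_gt0.
split=> //; split=> //.
have lnMd : ln (MM ^+ d) = d%:R * ln MM by rewrite lnXn // mulr_natl.
have H1 : ln M1 <= ln (2 * Num.max 1 l) + d%:R * ln MM.
  rewrite -lnMd -lnM ?posrE //.
  by rewrite ler_ln ?posrE // mulr_gt0.
have H2 : ln (Num.min 1 l) - ln (2 * Num.max 1 l) + d%:R * ln MM <= ln M1.
  rewrite -lnMd -ln_div ?posrE // -lnM ?posrE //.
  by rewrite ler_ln ?posrE // mulr_gt0.
have H3 : ln (Num.min 1 l) <= 0 by apply: ln_le0; rewrite ge_min lexx.
apply/ler_normlP; split; lra.
Qed.
End AV.
Lemma nonincr_step (R : realType) (w : nat -> R) :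
  (forall n, w n.+1 <= w n) -> {homo w : n m / (n <= m)%N >-> m <= n}.
Proof.
move=> h n m /subnK <-; elim: (m - n)%N => [|k ih]; first by rewrite add0n.
by rewrite addSn (le_trans (h _)).
Qed.

Lemma nondecr_step (R : realType) (w : nat -> R) :
  (forall n, w n <= w n.+1) -> {homo w : n m / (n <= m)%N >-> n <= m}.
Proof.
move=> h n m /subnK <-; elim: (m - n)%N => [|k ih]; first by rewrite add0n.
by rewrite addSn (le_trans _ (h _)).
Qed.

Lemma main_real (R : realType) (D K : R) (u : nat -> R) : 1 < D ->
  (forall n, (1 <= n)%N -> `|u n.+1 - u n| <= K / D ^+ n.+1) ->
  exists L, u @ \oo --> L /\
    forall n, (1 <= n)%N -> `|L - u n| <= K / (D ^+ n * (D - 1)).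
Proof.
move=> D1 h.
have D0 : 0 < D by apply: lt_trans D1.
have D10 : 0 < D - 1 by rewrite subr_gt0.
have K0 : 0 <= K.
  have := h 1%N isT; move/(le_trans (normr_ge0 _)).
  by rewrite pmulr_lge0 // invr_gt0 exprn_gt0.
pose s n := u n.+1.
pose e n := K / ((D - 1) * D ^+ n.+1).
have he : forall n, e n - e n.+1 = K / D ^+ n.+2.
  move=> n; rewrite /e !exprS; field.
  by rewrite !gt_eqF // ?mulr_gt0 // exprn_gt0.
have hs : forall n, `|s n.+1 - s n| <= K / D ^+ n.+2 by move=> n; exact: h.
pose w n := s n + e n.
pose z n := s n - e n.
have wdec : {homo w : n m / (n <= m)%N >-> m <= n}.
  apply: nonincr_step => n; rewrite /w.
  have := hs n; rewrite -he => /ler_normlP [_ H]; lra.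
have zinc : {homo z : n m / (n <= m)%N >-> n <= m}.
  apply: nondecr_step => n; rewrite /z.
  have := hs n; rewrite -he => /ler_normlP [H _]; lra.
have e0 : forall n, 0 <= e n.
  by move=> n; rewrite /e mulr_ge0 // invr_ge0 mulr_ge0 ?exprn_ge0 // ltW.
have wlb : has_lbound (range w).
  exists (z 0%N) => _ [n _ <-]; apply: (le_trans (zinc _ _ (leq0n n))).
  rewrite /z /w; have := e0 n; lra.
have wcv := nonincreasing_cvgn wdec wlb.
set L := inf (range w) in wcv.
have ecv : e @ \oo --> 0.
  have -> : e = geometric (K / ((D - 1) * D)) D^-1.
    apply/funext => n; rewrite /e /geometric /= exprVn exprS; field.
    by rewrite !gt_eqF // ?mulr_gt0 // exprn_gt0.
  apply: cvg_geometric; rewrite ger0_norm ?invr_ge0 ?ltW //.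
  by rewrite invf_lt1.
have scv : s @ \oo --> L.
  have -> : s = (fun n => w n - e n) by apply/funext => n; rewrite /w addrK.
  by rewrite -[L]subr0; apply: cvgB.
have zcv : z @ \oo --> L.
  by rewrite -[L]subr0; apply: cvgB.
exists L; split.
  rewrite -(cvg_shiftn 1).
  have -> : (fun n => u (n + 1)%N) = s by apply/funext => n; rewrite addn1.
  exact: scv.
case=> // k _.
have h1 : L <= w k.
  have := nonincreasing_cvgn_ge wdec (cvgP _ wcv) k.
  by rewrite (cvg_lim _ wcv).
have h2 : z k <= L.
  have := nondecreasing_cvgn_le zinc (cvgP _ zcv) k.
  by rewrite (cvg_lim _ zcv).
have ek : K / (D ^+ k.+1 * (D - 1)) = e k by rewrite /e [_ * (D - 1)]mulrC.
rewrite ek; rewrite /w /z /s in h1 h2.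
apply/ler_normlP; split; lra.
Qed.

Lemma coprime_nz (A B : {poly algC}) (lam : algC) :
  coprimep A B -> (A.[lam] != 0) || (B.[lam] != 0).
Proof.
move=> /Bezout_eq1_coprimepP [[u1 u2] /= h].
have := congr1 (fun p => p.[lam]) h; rewrite /= hornerD !hornerM hornerC.
case: (eqVneq A.[lam] 0) => [->|//]; case: (eqVneq B.[lam] 0) => [->|//].
by rewrite !mulr0 addr0 => /eqP; rewrite eq_sym oner_eq0.
Qed.

Lemma step_nz (x y lam : algC) (d : nat) : (2 <= d)%N -> lam != 0 ->
  (x != 0) || (y != 0) ->
  (x ^+ d + lam * y ^+ d != 0) || (x * y ^+ d.-1 != 0).
Proof.
move=> d2 l0 nz; rewrite -negb_and; apply/negP => /andP [h1 h2].
have dp : (0 < d)%N by apply: leq_trans d2.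
move: h2; rewrite mulf_eq0 expf_eq0 => /orP [/eqP x0|/andP [_ /eqP y0]].
  move: h1; rewrite x0 expr0n /= (gtn_eqF dp) add0r.
  rewrite mulf_eq0 (negbTE l0) /= expf_eq0 => /andP [_ /eqP y0].
  by move: nz; rewrite x0 y0 eqxx.
move: h1; rewrite y0 expr0n /= (gtn_eqF dp) mulr0 addr0.
rewrite expf_eq0 => /andP [_ /eqP x0].
by move: nz; rewrite x0 y0 eqxx.
Qed.

Lemma divX_eval (q : {poly algC}) (lam : algC) :
  q.[0] = 0 -> lam != 0 -> (q %/ 'X).[lam] = q.[lam] / lam.
Proof.
move=> q0 l0.
have h : ('X - 0%:P) %| q by rewrite dvdp_XsubCl /root q0.
rewrite polyC0 subr0 in h.
have := divpK h => e.
rewrite -{2}e hornerM hornerX mulfK //.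
Qed.

Lemma seq_nz (d : nat) (A B : {poly algC}) (lam : algC) :
  (2 <= d)%N -> coprimep A B -> lam != 0 -> forall n, (1 <= n)%N ->
  ((ABseq d A B n).1.[lam] != 0) || ((ABseq d A B n).2.[lam] != 0).
Proof.
move=> d2 cAB l0; case=> // n _; elim: n => [|n ih].
  have nz := @step_nz _ _ lam d d2 l0 (@coprime_nz A B lam cAB).
  rewrite /= /ABfirst; case: ifP => hA /=; first by rewrite !hornerE.
  have A0 : A.[0] = 0 by apply/eqP; rewrite -[_ == _]negbK hA.
  have dp : (0 < d)%N by apply: leq_trans d2.
  have e1 : (A ^+ d + 'X * B ^+ d).[0] = 0.
    by rewrite !hornerE A0 expr0n (gtn_eqF dp).
  have e2 : (A * B ^+ d.-1).[0] = 0 by rewrite hornerM A0 mul0r.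
  rewrite !divX_eval // !mulf_eq0 invr_eq0 (negbTE l0) !orbF.
  by move: nz; rewrite !hornerE.
by rewrite /= !hornerE; apply: step_nz.
Qed.

Theorem corollary5p3 (R : realType) (d : nat) (A B : {poly algC})
    (lambda : algC) (v : algC -> R) :
  (2 <= d)%N -> A != 0 -> B != 0 -> coprimep A B -> lambda != 0 ->
  is_absval v ->
  exists L : R,
    (fun n : nat => ln (Mnv v d A B n lambda) / (d ^ n)%:R) @ \oo --> L /\
    forall n0 : nat, (1 <= n0)%N ->
      `| L - ln (Mnv v d A B n0 lambda) / (d ^ n0)%:R |
        <= (ln (2 * Num.max 1 (v lambda)) - ln (Num.min 1 (v lambda)))
           / ((d ^ n0)%:R * (d%:R - 1)).
Proof.
move=> d2 A0 B0 cAB l0 hv.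
set K := ln (2 * Num.max 1 (v lambda)) - ln (Num.min 1 (v lambda)).
have D1 : 1 < (d%:R : R) by rewrite ltr1n.
have D0 : 0 < (d%:R : R) by apply: lt_trans D1.
set u := fun n : nat => ln (Mnv v d A B n lambda) / (d ^ n)%:R.
have step : forall n, (1 <= n)%N -> `|u n.+1 - u n| <= K / (d%:R : R) ^+ n.+1.
  case=> // k _.
  have nz := @seq_nz d A B lambda d2 cAB l0 k.+1 isT.
  have [_ [_ H]] := @step_ln R v hv _ _ lambda d d2 l0 nz.
  rewrite /u /Mnv /= !natrX.
  rewrite !hornerE.
  move: H; set M1 := Num.max _ _; set M0 := Num.max _ _ => H.
  have -> : ln M1 / d%:R ^+ k.+2 - ln M0 / d%:R ^+ k.+1
          = (ln M1 - d%:R * ln M0) / d%:R ^+ k.+2.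
    rewrite !exprS; field.
    by rewrite !gt_eqF ?exprn_gt0.
  rewrite normrM [`|_^-1|]gtr0_norm ?invr_gt0 ?exprn_gt0 //.
  by rewrite ler_wpM2r // invr_ge0 ltW // exprn_gt0.
have [L [HL Hb]] := @main_real R _ K u D1 step.
exists L; split; first exact: HL.
move=> n0 hn; have := Hb n0 hn; by rewrite /u -natrX.
Qed.
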